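(* Let $w(x,y)=x^{a_1}y^{b_1}\cdots x^{a_k}y^{b_k}\in F_2$ with all integers $a_i\neq0$, $b_i\neq 0$, let $B=\sum_{i=1}^k b_i\neq 0$ and $B_i=\sum_{j<i}b_j$. Write $2B_i=k_iB+T_i$ with integers $k_i$ and $0\le T_i<B$. If the word map $w:\mathrm{SL}(2,\mathbb{C})^2\to\mathrm{SL}(2,\mathbb{C})$ is not surjective, then for every integer $0\le T<B$, $$\sum_{i:\,T_i=T} a_i(-1)^{k_i}=0.$$
   Context: The word map sends $(X,Y)$ to $X^{a_1}Y^{b_1}\cdots X^{a_k}Y^{b_k}$. *)

(* Defs.v *)
From mathcomp Require Import all_boot all_algebra.
From mathcomp Require Import complex.
From mathcomp Require Import reals Rstruct.
Set Implicit Arguments.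
Unset Strict Implicit.
Unset Printing Implicit Defensive.
Import GRing.Theory Num.Theory.
Local Open Scope ring_scope.

Definition Cplx : numClosedFieldType := complex Rdefinitions.R.

Definition inSL2 (g : 'M[Cplx]_2) : Prop := \det g = 1.

(* The word w(X,Y) = X^{a_1} Y^{b_1} ... X^{a_k} Y^{b_k} (indices shifted to
   0..k-1), with integer exponents (negative powers = matrix inverses). *)
Definition word_map (k : nat) (a b : 'I_k -> int) (X Y : 'M[Cplx]_2) : 'M[Cplx]_2 :=
  \prod_(i < k) (X ^ (a i) * Y ^ (b i)).

Definition word_map_surjective (k : nat) (a b : 'I_k -> int) : Prop :=
  forall g : 'M[Cplx]_2, inSL2 g ->
    exists X Y : 'M[Cplx]_2, [/\ inSL2 X, inSL2 Y & word_map a b X Y = g].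

Definition Btot (k : nat) (b : 'I_k -> int) : int := \sum_(i < k) b i.

Definition Bpre (k : nat) (b : 'I_k -> int) (i : 'I_k) : int :=
  \sum_(j < k | (j < i)%N) b j.

Definition kq (k : nat) (b : 'I_k -> int) (i : 'I_k) : int :=
  ((2 * Bpre b i) %/ Btot b)%Z.
Definition Trem (k : nat) (b : 'I_k -> int) (i : 'I_k) : int :=
  ((2 * Bpre b i) %% Btot b)%Z.

(* Main.v *)
Require Import Defs.
From mathcomp Require Import all_boot all_algebra all_field.
From mathcomp Require Import ring zify.
Import GRing.Theory Num.Theory.
Local Open Scope ring_scope.

Lemma expz_hom (R : unitRingType) (g : int -> R) :
  (forall m n, g (m + n) = g m * g n) -> g 0 = 1 -> forall z, (g 1) ^ z = g z.
Proof.
move=> gD g0.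
have gn : forall n : nat, (g 1) ^+ n = g n.
  elim=> [|n IH]; first by rewrite expr0 g0.
  by rewrite exprSr IH -gD; congr g; lia.
case=> n; first exact: gn.
rewrite NegzE -exprnN gn.
have h1 : g (- n.+1%:Z) * g n.+1 = 1 by rewrite -gD addNr g0.
have h2 : g n.+1 * g (- n.+1%:Z) = 1 by rewrite -gD addrN g0.
have u : g n.+1 \is a GRing.unit by apply/unitrP; exists (g (- n.+1%:Z)).
by rewrite -[LHS]mul1r -h1 mulrK.
Qed.

Lemma conj_pow (R : unitRingType) (P X : R) :
  P \is a GRing.unit -> X \is a GRing.unit ->
  forall z, (P * X * P^-1) ^ z = P * X ^ z * P^-1.
Proof.
move=> uP uX z.
pose g z := P * X ^ z * P^-1.
have -> : P * X * P^-1 = g 1 by rewrite /g expr1z.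
apply: expz_hom => [m n|]; last by rewrite /g expr0z mulr1 divrr.
by rewrite /g exprzDr // !mulrA mulrVK.
Qed.

Lemma wm_conj (R : unitRingType) k (a b : 'I_k -> int) (P X Y : R) :
  P \is a GRing.unit -> X \is a GRing.unit -> Y \is a GRing.unit ->
  \prod_(i < k) ((P * X * P^-1) ^ (a i) * (P * Y * P^-1) ^ (b i)) =
  P * (\prod_(i < k) (X ^ (a i) * Y ^ (b i))) * P^-1.
Proof.
move=> uP uX uY.
pose f M := P * M * P^-1.
have fM : {morph f : x y / x * y >-> x * y}.
  by move=> x y; rewrite /f !mulrA mulrVK.
have f1 : f 1 = 1 by rewrite /f mulr1 divrr.
transitivity (f (\prod_(i < k) (X ^ (a i) * Y ^ (b i)))); last by [].
rewrite (big_morph f fM f1); apply: eq_bigr => i _.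
by rewrite !conj_pow // fM.
Qed.

Lemma wm_one (R : unitRingType) k (b : 'I_k -> int) (Y : R) (a : 'I_k -> int) :
  Y \is a GRing.unit ->
  \prod_(i < k) (1 ^ (a i) * Y ^ (b i)) = Y ^ (\sum_(i < k) b i).
Proof.
move=> uY.
have fM : {morph (fun z : int => Y ^ z) : x y / x + y >-> x * y}.
  by move=> x y; rewrite exprzDr.
rewrite (big_morph _ fM (expr0z Y)); apply: eq_bigr => i _.
by rewrite exp1rz mul1r.
Qed.

Section Gen.
Variable C : numClosedFieldType.

Definition mk (p q r s : C) : 'M[C]_2 :=
  \matrix_(i < 2, j < 2) if i == 0 then (if j == 0 then p else q) else (if j == 0 then r else s).

Lemma mkM p q r s p' q' r' s' :
  mk p q r s * mk p' q' r' s' = mk (p * p' + q * r') (p * q' + q * s') (r * p' + s * r') (r * q' + s * s').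
Proof.
apply/matrixP => i j; rewrite /mk !mxE big_ord_recl big_ord1 !mxE.
by case: i => [[|[|//]]] ? ; case: j => [[|[|//]]] ?.
Qed.

Lemma det_mk p q r s : \det (mk p q r s) = p * s - q * r.
Proof.
rewrite (expand_det_row _ 0) big_ord_recl big_ord1 /cofactor !det_mx11.
rewrite /mk !mxE /= /bump /= expr0 expr1; ring.
Qed.

Lemma mk1 : mk 1 0 0 1 = 1.
Proof.
apply/matrixP => i j; rewrite /mk !mxE.
by case: i => [[|[|//]]] ? ; case: j => [[|[|//]]] ?.
Qed.

Lemma mk_eta (M : 'M[C]_2) : M = mk (M 0 0) (M 0 1) (M 1 0) (M 1 1).
Proof.
apply/matrixP => i j; rewrite /mk !mxE.
by case: i => [[|[|//]]] ? ; case: j => [[|[|//]]] ?; congr (M _ _); apply: val_inj.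
Qed.

Lemma unit_det (M : 'M[C]_2) : \det M = 1 -> M \is a GRing.unit.
Proof. by move=> h; rewrite unitmxE h unitr1. Qed.

Lemma pow_diag (mu : C) : mu != 0 -> forall z,
  mk mu 0 0 mu^-1 ^ z = mk (mu ^ z) 0 0 (mu ^ (- z)).
Proof.
move=> mu0 z.
pose g z := mk (mu ^ z) 0 0 (mu ^ (- z)).
have -> : mk mu 0 0 mu^-1 = g 1 by rewrite /g expr1z exprN1.
apply: expz_hom => [m n|]; last by rewrite /g oppr0 expr0z mk1.
rewrite /g mkM opprD !expfzDr //; congr mk; ring.
Qed.

Lemma pow_unip (s : C) z : mk 1 s 0 1 ^ z = mk 1 (z%:~R * s) 0 1.
Proof.
pose g (z : int) := mk 1 (z%:~R * s) 0 1.
have -> : mk 1 s 0 1 = g 1 by rewrite /g mul1r.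
apply: expz_hom => [m n|]; last by rewrite /g mul0r mk1.
rewrite /g mkM intrD; congr mk; ring.
Qed.


Definition img {k} (a b : 'I_k -> int) (g : 'M[C]_2) :=
  exists X Y : 'M[C]_2, [/\ \det X = 1, \det Y = 1 & \prod_(i < k) (X ^ (a i) * Y ^ (b i)) = g].

Lemma img_conj k (a b : 'I_k -> int) g P :
  img a b g -> P \is a GRing.unit -> img a b (P * g * P^-1).
Proof.
case=> X [Y [dX dY <-]] uP.
have dP : \det P != 0 by rewrite -unitfE -unitmxE.
exists (P * X * P^-1), (P * Y * P^-1); split.
- by rewrite !detM detV dX mulr1 divff.
- by rewrite !detM detV dY mulr1 divff.
- by rewrite wm_conj // unit_det.
Qed.

Lemma prod_tri (al be : nat -> int) (s mu : C) : mu != 0 -> forall n,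
  \prod_(i < n) (mk 1 s 0 1 ^ al i * mk mu 0 0 mu^-1 ^ be i) =
  mk (mu ^ (\sum_(j < n) be j))
     (mu ^ (- \sum_(j < n) be j) * (s * \sum_(i < n) (al i)%:~R * mu ^ (2 * \sum_(j < i) be j)))
     0 (mu ^ (- \sum_(j < n) be j)).
Proof.
move=> mu0; elim=> [|n IH].
  by rewrite !big_ord0 oppr0 expr0z mulr0 mulr0 mk1.
rewrite big_ord_recr IH /= pow_unip pow_diag // !mkM.
rewrite [in RHS]big_ord_recr [\sum_(j < n.+1) _]big_ord_recr /=.
set S := \sum_(j < n) be j.
have e0 : mu ^ S != 0 by rewrite expfz_neq0.
have f0 : mu ^ (be n) != 0 by rewrite expfz_neq0.
rewrite opprD !expfzDr // -!invr_expz.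
have -> : (2 * S = S + S)%R by ring.
rewrite expfzDr //.
congr mk; field; by rewrite ?e0 ?f0.
Qed.

Lemma root_z (B : int) (d : C) : B != 0 -> d != 0 -> exists mu : C, mu != 0 /\ mu ^ B = d.
Proof.
move=> B0 d0; case: B B0 => [n|n] B0.
  have n0 : (0 < n)%N by case: n B0.
  exists (n.-root d); split; first by rewrite rootC_eq0.
  exact: rootCK.
exists (n.+1.-root d)^-1; split; first by rewrite invr_eq0 rootC_eq0.
by rewrite NegzE -exprnN -exprVn invrK rootCK.
Qed.

Arguments root_z {B d}.
Arguments img_conj {k a b g P}.

Lemma img_diag k (a b : 'I_k -> int) d : Btot b != 0 -> d != 0 -> img a b (mk d 0 0 d^-1).
Proof.
move=> B0 d0; have [mu [mu0 hmu]] := root_z B0 d0.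
exists 1, (mk mu 0 0 mu^-1); split.
- by rewrite det1.
- by rewrite det_mk mulr0 subr0 divff.
- rewrite wm_one; last by rewrite unit_det // det_mk mulr0 subr0 divff.
  by rewrite pow_diag // -invr_expz -/(Btot b) hmu.
Qed.

Lemma img_unip k (a b : 'I_k -> int) e : Btot b != 0 -> img a b (mk 1 e 0 1).
Proof.
move=> B0.
have B0' : (Btot b)%:~R != 0 :> C by rewrite intr_eq0.
exists 1, (mk 1 (e / (Btot b)%:~R) 0 1); split.
- by rewrite det1.
- by rewrite det_mk mulr0 subr0 mulr1.
- rewrite wm_one; last by rewrite unit_det // det_mk mulr0 subr0 mulr1.
  rewrite pow_unip -/(Btot b); congr mk; field; exact: B0'.
Qed.

Lemma img_neg k (a b : 'I_k.+1 -> int) (mu : C) e : mu != 0 -> mu ^ Btot b = -1 ->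
  (\sum_(i < k.+1) (a i)%:~R * mu ^ (2 * Bpre b i)) != 0 ->
  img a b (mk (-1) e 0 (-1)).
Proof.
move=> mu0 hB S0.
set S := \sum_(i < k.+1) _ in S0.
exists (mk 1 (- e / S) 0 1), (mk mu 0 0 mu^-1); split.
- by rewrite det_mk mulr0 subr0 mulr1.
- by rewrite det_mk mulr0 subr0 divff.
pose al j := a (inord j); pose be j := b (inord j).
have -> : \prod_(i < k.+1) (mk 1 (- e / S) 0 1 ^ a i * mk mu 0 0 mu^-1 ^ b i) =
   \prod_(i < k.+1) (mk 1 (- e / S) 0 1 ^ al i * mk mu 0 0 mu^-1 ^ be i).
  by apply: eq_bigr => i _; rewrite /al /be inord_val.
have hpre : forall i : 'I_k.+1, Bpre b i = \sum_(j < i) be j.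
  move=> i; rewrite (big_ord_widen k.+1 be (ltnW (ltn_ord i))) /Bpre.
  by apply: eq_bigr => j _; rewrite /be inord_val.
have htot : Btot b = \sum_(j < k.+1) be j.
  by rewrite /Btot; apply: eq_bigr => j _; rewrite /be inord_val.
have hS : S = \sum_(i < k.+1) (al i)%:~R * mu ^ (2 * \sum_(j < i) be j).
  by apply: eq_bigr => i _; rewrite /al inord_val hpre.
rewrite prod_tri // -hS -htot -invr_expz hB invrN1; congr mk; field; exact: S0.
Qed.

Lemma img_gen k (a b : 'I_k -> int) d e : Btot b != 0 -> d != 0 -> d != 1 -> d != -1 ->
  img a b (mk d e 0 d^-1).
Proof.
move=> B0 d0 d1 dN1.
have dd2 : 1 - d * d != 0.
  apply/eqP => h; have : d ^+ 2 == 1.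
    by rewrite expr2 eq_sym -subr_eq0 h.
  by rewrite sqrf_eq1 (negbTE d1) (negbTE dN1).
set x := e / (d^-1 - d).
set Q := mk 1 x 0 1.
have hQ : mk 1 (- x) 0 1 * Q = 1 by rewrite mkM -mk1; congr mk; ring.
have uQ : Q \is a GRing.unit by apply: unit_det; rewrite det_mk; ring.
have QV : Q^-1 = mk 1 (- x) 0 1 by rewrite -[Q^-1]mul1r -hQ mulrK.
have -> : mk d e 0 d^-1 = Q * mk d 0 0 d^-1 * Q^-1.
  rewrite QV !mkM; congr mk; rewrite /x; field; by rewrite ?d0 ?mulNr ?dd2.
exact: img_conj (@img_diag _ a b d B0 d0) uQ.
Qed.

Lemma img_upper k (a b : 'I_k.+1 -> int) :
  Btot b != 0 ->
  (exists mu : C, [/\ mu != 0, mu ^ Btot b = -1 &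
     (\sum_(i < k.+1) (a i)%:~R * mu ^ (2 * Bpre b i)) != 0]) ->
  forall d e f, d * f = 1 -> img a b (mk d e 0 f).
Proof.
move=> B0 [mu [mu0 hB S0]] d e f hdf.
have d0 : d != 0.
  by apply/eqP => d0; move: hdf; rewrite d0 mul0r => /eqP; rewrite eq_sym oner_eq0.
have hf : f = d^-1 by apply: (mulfI d0); rewrite hdf mulfV.
rewrite hf; have [->|d1] := eqVneq d 1; first by rewrite invr1; exact: img_unip.
have [->|dN1] := eqVneq d (-1); first by rewrite invrN1; exact: img_neg S0.
exact: img_gen.
Qed.

Lemma triang (g : 'M[C]_2) : \det g = 1 ->
  exists P d e f, [/\ P \is a GRing.unit, d * f = 1 & g = P * mk d e 0 f * P^-1].
Proof.
rewrite (mk_eta g) det_mk.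
move: (g 0 0) (g 0 1) (g 1 0) (g 1 1) => p q r s hdet.
have [q0|q0] := eqVneq q 0.
  set P := mk 0 1 1 0.
  have PP : P * P = 1 by rewrite mkM -mk1; congr mk; ring.
  have uP : P \is a GRing.unit by apply/unitrP; exists P.
  have PV : P^-1 = P by rewrite -[P^-1]mul1r -PP mulrK.
  exists P, s, r, p; split => //.
    by move: hdet; rewrite q0 mul0r subr0 mulrC.
  by rewrite PV q0 !mkM; congr mk; ring.
set t := p + s.
set sq := sqrtC (t ^+ 2 - 4).
set d := (t + sq) / 2.
have two0 : (2 : C) != 0 by rewrite pnatr_eq0.
have hd : d * d = t * d - 1.
  apply/eqP; rewrite -subr_eq0; apply/eqP.
  transitivity ((sq ^+ 2 - (t ^+ 2 - 4)) / 4); first by rewrite /d; field.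
  by rewrite /sq sqrtCK subrr mul0r.
have hrq : r * q = p * s - 1 by rewrite -hdet; ring.
set P := mk q 0 (d - p) 1.
have uP : P \is a GRing.unit by rewrite unitmxE det_mk mulr1 mul0r subr0 unitfE.
exists P, d, 1, (t - d); split => //.
  by rewrite mulrBr hd; ring.
apply: (canRL (mulrK uP)).
rewrite !mkM; congr mk; rewrite /t; try ring.
apply/eqP; rewrite -subr_eq0; apply/eqP.
transitivity ((r * q - (p * s - 1)) - (d * d - (t * d - 1))); first by rewrite /t; ring.
by rewrite hrq hd !subrr.
Qed.

Lemma surj_gen k (a b : 'I_k.+1 -> int) :
  Btot b != 0 ->
  (exists mu : C, [/\ mu != 0, mu ^ Btot b = -1 &
     (\sum_(i < k.+1) (a i)%:~R * mu ^ (2 * Bpre b i)) != 0]) ->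
  forall g : 'M[C]_2, \det g = 1 -> img a b g.
Proof.
move=> B0 hmu g /triang [P [d [e [f [uP hdf ->]]]]].
exact: img_conj (@img_upper k a b B0 hmu d e f hdf) uP.
Qed.

End Gen.

Section PB.
Variable C : numClosedFieldType.

Lemma neg1z (z : int) : (((-1 : int) ^ z)%:~R : C) = (-1) ^ z.
Proof.
pose g z := (((-1 : int) ^ z)%:~R : C).
have -> : (-1 : C) = g 1 by rewrite /g expr1z rmorphN1.
symmetry; apply: expz_hom => [m n|]; last by rewrite /g expr0z.
by rewrite /g exprzDr ?unitrN1 // intrM.
Qed.

Lemma sepq n : (0 < n)%N -> separable_poly ('X^n + 1%:P : {poly C}).
Proof.
move=> n0; rewrite unlock /separable_poly derivD derivXn derivC addr0.
apply/Bezout_coprimepP; exists ((n%:R)%:P, -'X) => /=.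
have -> : (n%:R)%:P * ('X^n + 1%:P) + - 'X * ('X^(n.-1) *+ n) = (n%:R)%:P :> {poly C}.
  case: n n0 => [//|n] _ /=.
  rewrite mulNr mulrnAr -exprS polyC_natr mulrDr mulr1 mulr_natl; ring.
by rewrite polyC_eqp1 pnatr_eq0; case: n n0.
Qed.

Lemma regroup k (a b : 'I_k -> int) n (mu : C) :
  (0 < n)%N -> Btot b = n%:Z -> mu != 0 -> mu ^ Btot b = -1 ->
  \sum_(i < k) (a i)%:~R * mu ^ (2 * Bpre b i) =
  (\poly_(j < n) ((\sum_(i < k | Trem b i == j%:Z) a i * (-1) ^ kq b i)%:~R : C)).[mu].
Proof.
move=> n0 hBn mu0 hB.
have B0 : Btot b != 0 by rewrite hBn eqz_nat -lt0n.
have t0 : forall i, 0 <= Trem b i by move=> i; exact: modz_ge0.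
have hlt : forall i, (`|Trem b i|%N < n)%N.
  move=> i; rewrite -ltz_nat gez0_abs //; have h := ltz_mod (2 * Bpre b i) B0.
  have e : `|Btot b|%N = n by rewrite hBn.
  by rewrite -e.
set f := fun i => ((a i * (-1) ^ kq b i)%:~R : C).
have term : forall i, (a i)%:~R * mu ^ (2 * Bpre b i) = f i * mu ^+ `|Trem b i|%N.
  move=> i; rewrite /f intrM neg1z.
  have e : 2 * Bpre b i = kq b i * Btot b + Trem b i by exact: divz_eq.
  rewrite e expfzDr // [kq b i * _]mulrC -exprz_exp hB.
  by rewrite -{1}(gez0_abs (t0 i)) mulrA.
rewrite (eq_bigr _ (fun i _ => term i)) horner_poly.
symmetry.
rewrite (eq_bigr (fun j : 'I_n => \sum_(i < k) (if Trem b i == (j : nat)%:Z then f i * mu ^+ j else 0))); last first.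
  move=> j _; rewrite rmorph_sum mulr_suml big_mkcond /=; apply: eq_bigr => i _.
  by case: ifP.
rewrite exchange_big; apply: eq_bigr => i _ /=.
rewrite -big_mkcond /= (big_pred1 (Ordinal (hlt i))) //.
move=> j /=; rewrite -(inj_eq val_inj) /= -eqz_nat gez0_abs // eq_sym.
Qed.

Lemma exists_mu k (a b : 'I_k -> int) (T : int) : 0 <= T < Btot b ->
  \sum_(i < k | Trem b i == T) a i * (-1) ^ kq b i != 0 ->
  exists mu : C, [/\ mu != 0, mu ^ Btot b = -1 &
    \sum_(i < k) (a i)%:~R * mu ^ (2 * Bpre b i) != 0].
Proof.
move=> /andP [T0 TB] hc.
case hBn : (Btot b) => [n|n]; last by move: TB; rewrite hBn NegzE; lia.
rewrite hBn in TB.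
have n0 : (0 < n)%N by lia.
have Tn : (`|T|%N < n)%N by rewrite -ltz_nat gez0_abs.
set p := \poly_(j < n) ((\sum_(i < k | Trem b i == j%:Z) a i * (-1) ^ kq b i)%:~R : C).
have p0 : p != 0.
  apply/eqP => hp; have : p`_`|T|%N = 0 by rewrite hp coef0.
  rewrite coef_poly Tn gez0_abs // => /eqP; rewrite intr_eq0 (negbTE hc).
  by [].
set q := ('X^n + 1%:P : {poly C}).
have [rs hrs] := closed_field_poly_normal q.
rewrite lead_coefXnaddC // scale1r in hrs.
have urs : uniq rs by rewrite -separable_prod_XsubC -hrs sepq.
have [/hasP [z zrs /negP nz]| /hasPn allr] := boolP (has (fun z => ~~ root p z) rs).
  have qz : root q z by rewrite hrs root_prod_XsubC.
  have zn : z ^+ n = -1.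
    move: qz => /rootP; rewrite hornerD hornerXn hornerC => /eqP.
    by rewrite addr_eq0 => /eqP.
  have z0 : z != 0.
    have : z ^+ n != 0 by rewrite zn oppr_eq0 oner_eq0.
    by rewrite expf_eq0 n0.
  have hB : z ^ Btot b = -1 by rewrite hBn.
  exists z; split => //.
  rewrite (@regroup k a b n z n0 hBn z0 hB).
  by apply/negP.
have allr' : all (root p) rs by apply/allP => z /allr /negPn.
have dv : q %| p by rewrite hrs uniq_roots_dvdp // uniq_rootsE.
have := dvdp_leq p0 dv; rewrite size_XnaddC // => h.
by move: (leq_trans h (size_poly _ _)); rewrite ltnn.
Qed.

End PB.

Theorem corollary7p3 (k : nat) (a b : 'I_k -> int) :
  (forall i, a i != 0) ->
  (forall i, b i != 0) ->
  Btot b != 0 ->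
  ~ word_map_surjective a b ->
  forall T : int, 0 <= T < Btot b ->
    \sum_(i < k | Trem b i == T) a i * (-1) ^ (kq b i) = 0.
Proof.
move=> ha hb B0 nsurj T hT.
apply/eqP; apply: contraT => hc; exfalso; apply: nsurj.
have hmu := @exists_mu Cplx k a b T hT hc.
case: k a b ha hb B0 hT hc hmu => [|k] a b _ _ B0 _ _ hmu.
  by rewrite /Btot big_ord0 eqxx in B0.
move=> g hg.
have [X [Y [dX dY hw]]] := @surj_gen Cplx k a b B0 hmu g hg.
by exists X, Y; split.
Qed.
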